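(* Let $\mathfrak S=(\mathcal S,\mathcal U,T_{\mathfrak s})$ be a controlled Markov process, $\mathcal P=\langle B_1,\dots,B_\ell\rangle$ a partition of $\mathcal S$ into measurable sets, $s^0\in\mathcal S$ an initial state and $\rho$ a stationary control policy. Suppose that for every finite path $(s^0,\dots,s^n)\in\mathcal S^{n+1}$ of $\mathfrak S$ starting at $s^0$ and every odd $i\in\{1,\dots,\ell\}$, $$s^n\in B_i\implies P_{s^n}^{\rho}\Big(\mathfrak S\models\lozenge\big(\square\neg B_i\vee\textstyle\bigvee_{j\text{ even},\,j\in\{i+1,\dots,\ell\}}B_j\big)\Big)=1.$$ Then $P_{s^0}^{\rho}(\mathfrak S\models\mathit{Parity}(\mathcal P))=1$.
   Context: CMP: $\mathfrak S=(\mathcal S,\mathcal U,T_{\mathfrak s})$ with $\mathcal S$ a Borel space, $\mathcal U$ a finite input set, $T_{\mathfrak s}(\cdot\mid s,u)$ a probability measure on the Borel sets of $\mathcal S$. A stationary policy is a universally measurable $\rho:\mathcal S\to\mathcal U$; $P_s^\rho$ is the induced probability measure on infinite paths $(s^0,s^1,\dots)$ with $s^0=s$ and $s^{k+1}\sim T_{\mathfrak s}(\cdot\mid s^k,\rho(s^k))$. A finite path of length $n+1$ is any sequence $(s^0,\dots,s^n)$ of states. Temporal operators have LTL semantics on infinite paths: $\lozenge\phi$ means $\phi$ holds at some suffix; $\square\neg B_i$ means $B_i$ is never visited from that point on; a set $B_j$ as a formula holds at a position if the current state is in $B_j$. $\mathit{Parity}(\mathcal P)$ holds on a path iff for every odd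 $i$, if $B_i$ is visited infinitely often then $B_j$ is visited infinitely often for some even $j\in\{i+1,\dots,\ell\}$. *)

(* Defs.v *)
From HB Require Import structures.
From mathcomp Require Import all_boot all_order all_algebra.
From mathcomp Require Import all_classical all_reals all_analysis.
Set Implicit Arguments. Unset Strict Implicit. Unset Printing Implicit Defensive.
Import Order.TTheory GRing.Theory Num.Theory.
Local Open Scope classical_set_scope.
Local Open Scope ring_scope.
Local Open Scope ereal_scope.

Definition coord_cylinders d (S : measurableType d) : set (set (nat -> S)) :=
  [set C | exists k A, measurable A /\ C = (fun w : nat -> S => w k) @^-1` A].

Arguments coord_cylinders {d} S.

Definition paths d (S : measurableType d) :=
  g_sigma_algebraType (coord_cylinders S).

(* Universally measurable sets / maps: measurable for the completion of every
   probability measure on S. *)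
Definition univ_measurable_set d (S : measurableType d) (R : realType)
    (E : set S) : Prop :=
  forall mu : probability S R, exists B1 B2 : set S,
    [/\ measurable B1, measurable B2, B1 `<=` E, E `<=` B2 &
        mu (B2 `\` B1) = 0].

Definition univ_measurable_policy d (S : measurableType d) (R : realType)
    (U : finType) (rho : S -> U) : Prop :=
  forall u : U, univ_measurable_set R (rho @^-1` [set u]).

(* Finite-dimensional distributions of the chain controlled by rho:
   fdd Ts rho m A s = probability, starting at s, that the states at times
   0..m lie in A 0, ..., A m respectively (Ionescu-Tulcea iterated integral).*)
Fixpoint fdd d (S : measurableType d) (R : realType) (U : finType)
    (Ts : U -> R.-pker S ~> S) (rho : S -> U) (m : nat)
    (A : nat -> set S) (s : S) {struct m} : \bar R :=
  match m with
  | 0%N => (\1_(A 0%N) s)%:E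
  | m'.+1 => (\1_(A 0%N) s)%:E *
             \int[Ts (rho s) s]_y fdd Ts rho m' (fun k => A k.+1) y
  end.

Definition is_path_measure d (S : measurableType d) (R : realType)
    (U : finType) (Ts : U -> R.-pker S ~> S) (rho : S -> U)
    (P : S -> probability (paths S) R) : Prop :=
  forall (s : S) (m : nat) (A : nat -> set S),
    (forall k, measurable (A k)) ->
    P s [set w : paths S | forall k, (k <= m)%N -> w k \in A k]
      = fdd Ts rho m A s.

Definition measurable_partition d (S : measurableType d) (l : nat)
    (B : nat -> set S) : Prop :=
  [/\ forall i, (1 <= i <= l)%N -> measurable (B i),
      forall i j, (1 <= i <= l)%N -> (1 <= j <= l)%N -> i <> j ->
        B i `&` B j = set0 &
      forall x : S, exists2 i, (1 <= i <= l)%N & B i x].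

Definition inf_often d (S : measurableType d) (B : set S) (w : nat -> S) :=
  forall N, exists2 k, (N <= k)%N & B (w k).

Definition parity d (S : measurableType d) (l : nat) (B : nat -> set S) :
    set (paths S) :=
  [set w | forall i, odd i -> (1 <= i <= l)%N -> inf_often (B i) w ->
     exists j, [/\ ~~ odd j, (i + 1 <= j <= l)%N & inf_often (B j) w]].

Definition eventually_safe d (S : measurableType d) (l : nat)
    (B : nat -> set S) (i : nat) : set (paths S) :=
  [set w | exists m,
     (forall k, (m <= k)%N -> ~ B i (w k)) \/
     (exists j, [/\ ~~ odd j, (i + 1 <= j <= l)%N & B j (w m)])].

(* Main.v *)
Require Import Defs.
From HB Require Import structures.
From mathcomp Require Import all_boot all_order all_algebra.
From mathcomp Require Import all_classical all_reals all_analysis.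
From mathcomp Require Import measurable_realfun.
From mathcomp Require Import zify.
Set Implicit Arguments. Unset Strict Implicit. Unset Printing Implicit Defensive.
Import Order.TTheory GRing.Theory Num.Theory.
Local Open Scope classical_set_scope.
Local Open Scope ring_scope.
Local Open Scope ereal_scope.

Section lint.
Context d (T : measurableType d) (R : realType) (mu : {measure set T -> \bar R}).
Import HBNNSimple.

Lemma lint_le (f g : T -> \bar R) : (forall x, 0 <= f x) -> (forall x, f x <= g x) ->
  \int[mu]_x f x <= \int[mu]_x g x.
Proof.
move=> f0 fg; have g0 x : 0 <= g x by exact: le_trans (f0 x) (fg x).
rewrite !ge0_integralTE //; apply: ereal_sup_le => _ [h hf <-]; exists h => //= x.
exact: le_trans (hf x) (fg x).
Qed.

Lemma lint_approx (f : T -> \bar R) (x : \bar R) : (forall y, 0 <= f y) ->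
  x < \int[mu]_y f y -> exists h : {nnsfun T >-> R},
  (forall y, (h y)%:E <= f y) /\ x < \int[mu]_y (h y)%:E.
Proof.
move=> f0; rewrite ge0_integralTE // => /ereal_sup_gt [_ [h hf <-] xh].
by exists h; split => //; rewrite integralT_nnsfun.
Qed.

Lemma lint_nnsfun_le (h : {nnsfun T >-> R}) (f : T -> \bar R) :
  (forall y, (h y)%:E <= f y) -> \int[mu]_y (h y)%:E <= \int[mu]_y f y.
Proof.
move=> hf; apply: lint_le => // y; rewrite lee_fin; exact: fun_ge0.
Qed.

Lemma lint_superadd (f g : T -> \bar R) : (forall x, 0 <= f x) -> (forall x, 0 <= g x) ->
  \int[mu]_x f x + \int[mu]_x g x <= \int[mu]_x (f x + g x).
Proof.
move=> f0 g0.
have ge0_cases (a : \bar R) : 0 <= a -> a \is a fin_num \/ a = +oo.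
  by case: a => //= [r|] _; [left | right].
have fg0 x : 0 <= f x + g x by exact: adde_ge0.
have step1 (h1 : {nnsfun T >-> R}) : (forall x, (h1 x)%:E <= f x) ->
    \int[mu]_x (h1 x)%:E + \int[mu]_x g x <= \int[mu]_x (f x + g x).
  move=> h1f.
  have h10 x : 0 <= (h1 x)%:E by rewrite lee_fin; exact: fun_ge0.
  have [h1fin|h1y] := ge0_cases _ (integral_ge0 mu (D := setT) (fun x _ => h10 x)).
    rewrite -leeBrDl // [X in X <= _]ge0_integralTE //.
    apply: ge_ereal_sup => _ [h2 h2g <-].
    have h20 x : 0 <= (h2 x)%:E by rewrite lee_fin; exact: fun_ge0.
    rewrite leeBrDl // -integralT_nnsfun -(ge0_integralD mu measurableT) //; first last.
    - by apply/measurable_EFinP; exact: measurable_funP.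
    - by apply/measurable_EFinP; exact: measurable_funP.
    apply: lint_le.
      by move=> x; apply: adde_ge0; rewrite lee_fin; exact: fun_ge0.
    by move=> x; apply: leeD.
  have : \int[mu]_x (h1 x)%:E <= \int[mu]_x (f x + g x).
    apply: lint_le => // x; apply: le_trans (h1f x) _; exact: leeDl.
  by rewrite h1y leye_eq => /eqP ->; rewrite leey.
have [gfin|gy] := ge0_cases _ (integral_ge0 mu (D := setT) (fun x _ => g0 x)).
  rewrite -leeBrDr // [X in X <= _]ge0_integralTE //.
  apply: ge_ereal_sup => _ [h1 h1f <-].
  by rewrite leeBrDr // -integralT_nnsfun; exact: step1.
have : \int[mu]_x g x <= \int[mu]_x (f x + g x).
  apply: lint_le => // x; exact: leeDr.
by rewrite gy leye_eq => /eqP ->; rewrite leey.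
Qed.

Lemma lint_zero (mu1 : mu setT = 1) (f : nat -> T -> \bar R)
  (f0 : forall N y, 0 <= f N y) (f1 : forall N y, f N y <= 1)
  (fdec : forall N y, f N.+1 y <= f N y)
  (flim : forall (e : R) y, (0 < e)%R -> ~ (forall N, e%:E < f N y)) :
  forall e : R, (0 < e)%R -> exists N, \int[mu]_y f N y <= e%:E.
Proof.
move=> e e0; apply: contrapT => H.
have H' N : e%:E < \int[mu]_y f N y.
  by rewrite ltNge; apply/negP => HN; apply: H; exists N.
have /choice [hs hsP] : forall N, exists h : {nnsfun T >-> R},
    (forall y, (h y)%:E <= f N y) /\ e%:E < \int[mu]_y (h y)%:E.
  by move=> N; apply: lint_approx.
have fdec' N M y : (N <= M)%N -> f M y <= f N y.
  elim: M => [|M IH]; first by rewrite leqn0 => /eqP ->.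
  rewrite leq_eqVlt => /orP [/eqP -> //|]; rewrite ltnS => /IH.
  exact: le_trans (fdec M y).
pose dl := (e / 2)%R.
have dl0 : (0 < dl)%R by rewrite divr_gt0.
pose E N := [set y | (dl < hs N y)%R].
have mE N : measurable (E N).
  rewrite /E (_ : [set y | (dl < hs N y)%R] = hs N @^-1` `]dl, +oo[%classic).
    by apply: measurable_funPTI; exact: measurable_itv.
  by apply/seteqP; split => y /=; rewrite in_itv /= andbT.
have muE N : dl%:E < mu (E N).
  have hle : \int[mu]_y (hs N y)%:E <= mu (E N) + dl%:E.
    have -> : mu (E N) + dl%:E = \int[mu]_y ((\1_(E N) y)%:E + (cst dl%:E) y).
      rewrite ge0_integralD //=; last 2 first.
      - by apply/measurable_EFinP; exact: measurable_indic.
      - by move=> y _; rewrite lee_fin ltW.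
      by rewrite integral_indic // setIT integral_cst // mu1 mule1.
    have [hf _] := hsP N.
    apply: ge0_le_integral => //.
    - by move=> y _; rewrite lee_fin; exact: fun_ge0.
    - by apply/measurable_EFinP; exact: measurable_funP.
    - apply: emeasurable_funD; last exact: measurable_cst.
      by apply/measurable_EFinP; exact: measurable_indic.
    move=> y _ /=; have hy1 : (hs N y <= 1)%R.
      by rewrite -lee_fin; exact: le_trans (hf y) (f1 N y).
    rewrite -EFinD lee_fin /indic; case: (boolP (y \in E N)) => [yE|].
      by rewrite /= (le_trans hy1) // lerDl ltW.
    rewrite notin_setE /E /= => /negP; rewrite -leNgt => hyd; by rewrite add0r.
  have [_ eh] := hsP N.
  have := lt_le_trans eh hle.
  have -> : e = (dl + dl)%R by rewrite /dl -splitr.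
  by rewrite EFinD lteD2rE.
pose F N := \bigcup_(m in [set m | (N <= m)%N]) E m.
have mF N : measurable (F N) by apply: bigcup_measurable => m _; exact: mE.
have muF N : dl%:E < mu (F N).
  apply: lt_le_trans (muE N) _; apply: le_measure; rewrite ?inE //.
  by move=> y Ey; exists N => //=.
have cap0 : \bigcap_N F N = set0.
  apply/seteqP; split => // y Fy; apply: (flim dl y dl0) => N.
  have [m /= Nm Emy] := Fy N I.
  have [hf _] := hsP m.
  apply: lt_le_trans (fdec' _ _ _ Nm).
  by apply: lt_le_trans (hf y); rewrite lte_fin.
have Fdec : nonincreasing_seq F.
  move=> n m nm; apply/subsetPset => y [k /= nk Eky]; exists k => //=; exact: leq_trans nm nk.
have cvgF : mu \o F @ \oo --> 0.
  have := @nonincreasing_cvg_mu _ _ _ mu F.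
  rewrite cap0 measure0; apply => //.
  apply: le_lt_trans (le_measure _ _ _ (@subsetT _ (F 0%N))) _; rewrite ?inE //.
  have h1 : mu setT < +oo by rewrite mu1 ltry.
  exact: h1.
have : dl%:E <= limn (mu \o F).
  apply: lime_ge; first exact: (cvgP _ cvgF).
  by near=> n; exact: ltW (muF n).
by rewrite (cvg_lim _ cvgF) // lee_fin leNgt dl0.
Unshelve. all: by end_near.
Qed.
Lemma lint_sum (n : nat) (h : nat -> T -> \bar R) : (forall t y, 0 <= h t y) ->
  \sum_(0 <= t < n) \int[mu]_y h t y <= \int[mu]_y (\sum_(0 <= t < n) h t y).
Proof.
move=> h0; elim: n => [|n IH].
  by rewrite big_geq //; apply: integral_ge0 => y _; apply: sume_ge0.
rewrite big_nat_recr //=.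
rewrite [X in _ <= X](eq_integral (fun y => \sum_(0 <= t < n) h t y + h n y)); last by move=> y _; rewrite big_nat_recr.
apply: le_trans (lint_superadd _ _) => //.
- by apply: leeD.
- by move=> y; apply: sume_ge0 => t _.
Qed.

End lint.
Section paths_meas.
Context d (S : measurableType d).

Definition Cyl m (A : nat -> set S) : set (paths S) :=
  [set w | forall k, (k <= m)%N -> w k \in A k].
Definition Rect (A : nat -> set S) : set (paths S) := [set w | forall k, A k (w k)].
Definition Lsup (Bi : set S) : set (paths S) := [set w | inf_often Bi w].
Definition shiftA (A : nat -> set S) : nat -> set S :=
  fun u => if u is u'.+1 then A u' else setT.
Definition pat (Bi : set S) N t u : set S :=
  if u == (N + t)%N then Bi else if (N <= u < N + t)%N then ~` Bi else setT.
Definition piece Bi A N t := Cyl (N + t) (fun u => A u `&` pat Bi N t u).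
Definition Zs Bi A N := \bigcup_t piece Bi A N t.

Lemma mcoord k (A : set S) : measurable A ->
  measurable ([set w : paths S | A (w k)]).
Proof. by move=> mA; apply: sub_gen_smallest; exists k, A. Qed.

Lemma mCyl m A : (forall k, measurable (A k)) -> measurable (Cyl m A).
Proof.
move=> mA.
have -> : Cyl m A = \bigcap_(k in [set k | (k <= m)%N]) [set w : paths S | A k (w k)].
  apply/seteqP; split => w /= H k /= km; first by rewrite -inE; exact: H.
  by rewrite inE; exact: H.
by apply: bigcap_measurable; [exists 0%N | move=> k _; exact: mcoord].
Qed.

Lemma mRect A : (forall k, measurable (A k)) -> measurable (Rect A).
Proof.
move=> mA.
have -> : Rect A = \bigcap_k [set w : paths S | A k (w k)].
  apply/seteqP; split => w /= H k; first by move=> _; exact: H.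
  exact: H k I.
by apply: bigcapT_measurable => k; exact: mcoord.
Qed.

Lemma mLsup Bi : measurable Bi -> measurable (Lsup Bi).
Proof.
move=> mB.
have -> : Lsup Bi = \bigcap_N \bigcup_(k in [set k | (N <= k)%N])
    [set w : paths S | Bi (w k)].
  apply/seteqP; split => w /= H N.
    by move=> _; have [k Nk Bk] := H N; exists k.
  by have [k Nk Bk] := H N I; exists k.
apply: bigcapT_measurable => N; apply: bigcup_measurable => k _; exact: mcoord.
Qed.

Lemma mshiftA A : (forall k, measurable (A k)) -> forall k, measurable (shiftA A k).
Proof. by move=> mA [|k] //=. Qed.

Lemma mpat Bi N t u : measurable Bi -> measurable (pat Bi N t u).
Proof.
move=> mB; rewrite /pat; case: ifP => // _; case: ifP => // _; exact: measurableC.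
Qed.

Lemma mpiece Bi A N t : measurable Bi -> (forall k, measurable (A k)) ->
  measurable (piece Bi A N t).
Proof.
move=> mB mA; apply: mCyl => k; apply: measurableI => //; exact: mpat.
Qed.

Lemma mZs Bi A N : measurable Bi -> (forall k, measurable (A k)) ->
  measurable (Zs Bi A N).
Proof. by move=> mB mA; apply: bigcupT_measurable => t; exact: mpiece. Qed.

Lemma Zs_dec Bi A N : Zs Bi A N.+1 `<=` Zs Bi A N.
Proof.
move=> w [t _ Hw].
have HA u : (u <= N.+1 + t)%N -> A u (w u) /\ pat Bi N.+1 t u (w u).
  by move=> uN; have := Hw u uN; rewrite inE => -[].
have [BN|nBN] := pselect (Bi (w N)).
  exists 0%N => // u; rewrite addn0 => uN; rewrite inE; split.
    by apply: (HA u _).1; lia.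
  rewrite /pat addn0; have [->|uNN] := eqVneq u N => //.
  by rewrite (_ : (N <= u < N)%N = false) //; lia.
exists t.+1 => // u uN; rewrite inE; split.
  by apply: (HA u _).1; lia.
have [uN'|uN'] := eqVneq u N.
  rewrite /pat uN' (_ : (N == N + t.+1)%N = false); last by apply/negbTE; rewrite neq_ltn; apply/orP; left; lia.
  by rewrite leqnn /= (_ : (N < N + t.+1)%N) //; lia.
have := (HA u _).2; rewrite /pat => /(_ (ltac:(lia))).
rewrite (_ : (u == N.+1 + t)%N = (u == N + t.+1)%N); last by rewrite addSnnS.
case: ifP => // _.
have -> : (N.+1 <= u < N.+1 + t)%N = (N <= u < N + t.+1)%N.
  by apply/idP/idP => /andP [h1 h2]; apply/andP; split; lia.
by [].
Qed.

Lemma Zs_cap Bi A : \bigcap_N Zs Bi A N `<=` Rect A `&` Lsup Bi.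
Proof.
move=> w H; split.
  move=> k; have [t _ Hw] := H k I.
  by have := Hw k (leq_addr _ _); rewrite inE => -[].
move=> N; have [t _ Hw] := H N I; exists (N + t)%N; first exact: leq_addr.
by have := Hw (N + t)%N (leqnn _); rewrite inE /pat eqxx => -[].
Qed.

Lemma piece_triv Bi A N : trivIset setT (piece Bi A N).
Proof.
suff H t1 t2 w : (t1 < t2)%N -> piece Bi A N t1 w -> piece Bi A N t2 w -> False.
  move=> t1 t2 _ _ [w [w1 w2]]; apply/eqP; apply: contrapT => /negP.
  rewrite neq_ltn => /orP [h|h]; [exact: H h w1 w2|exact: H h w2 w1].
move=> t12 H1 H2.
have := H1 (N + t1)%N (leqnn _); rewrite inE /pat eqxx => -[_ B1].
have := H2 (N + t1)%N (ltac:(lia)); rewrite inE /pat.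
rewrite (_ : (N + t1 == N + t2)%N = false); last by apply/negbTE; rewrite neq_ltn; apply/orP; left; lia.
by rewrite (_ : (N <= N + t1 < N + t2)%N) /=; [move=> [_ /(_ B1)]|lia].
Qed.

End paths_meas.
Lemma cover_first d (S : measurableType d) (Bi : set S) A N :
  Rect (shiftA A) `&` Lsup Bi `<=`
  \bigcup_t Cyl (N + t).+1 (shiftA (fun u => A u `&` pat Bi N t u)).
Proof.
move=> w [HR HL].
have ex : exists k, (N.+1 <= k)%N && `[< Bi (w k) >].
  by have [k Nk Bk] := HL N.+1; exists k; rewrite Nk /=; apply/asboolP.
case: (ex_minnP ex) => k /andP [Nk /asboolP Bk] kmin.
exists (k - N.+1)%N => //; move=> [|u] uk; rewrite inE //=.
split; first exact: (HR u.+1).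
rewrite /pat; have [uE|uE] := eqVneq u (N + (k - N.+1))%N.
  by have -> : u.+1 = k by lia.
case: ifP => // /andP [h1 h2] Bu.
have : (N.+1 <= u.+1)%N && `[< Bi (w u.+1) >] by rewrite ltnS h1 /=; apply/asboolP.
move=> /kmin; lia.
Qed.

Section markov.
Context (d : measure_display) (S : measurableType d) (R : realType)
    (U : finType) (Ts : U -> R.-pker S ~> S) (rho : S -> U)
    (P : S -> probability (paths S) R) (HP : is_path_measure Ts rho P).

Lemma MS A : (forall k, measurable (A k)) -> forall s m,
  P s (Cyl m.+1 (shiftA A)) = \int[Ts (rho s) s]_y P y (Cyl m A).
Proof.
move=> mA s m; rewrite /Cyl HP; last exact: mshiftA.
rewrite /= indicE mem_set // mul1e; apply: eq_integral => y _.
by rewrite HP.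
Qed.

End markov.
Section key.
Context (d : measure_display) (S : measurableType d) (R : realType)
    (U : finType) (Ts : U -> R.-pker S ~> S) (rho : S -> U)
    (P : S -> probability (paths S) R) (HP : is_path_measure Ts rho P).

Lemma Kstep (Bi : set S) A : measurable Bi -> (forall k, measurable (A k)) ->
  (forall y, P y (Rect A `&` Lsup Bi) = 0) ->
  forall s, P s (Rect (shiftA A) `&` Lsup Bi) = 0.
Proof.
move=> mB mA H0 s.
pose mu := Ts (rho s) s.
pose f N y := P y (Zs Bi A N).
have mAp N t : forall k, measurable ((fun u => A u `&` pat Bi N t u) k).
  by move=> k; apply: measurableI => //; exact: mpat.
have mX : measurable (Rect (shiftA A) `&` Lsup Bi).
  exact: measurableI (mRect (mshiftA mA)) (mLsup mB).
have stepA N : P s (Rect (shiftA A) `&` Lsup Bi) <= \int[mu]_y f N y.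
  apply: le_trans (measure_sigma_subadditive _
    (fun t => mCyl _ (mshiftA (mAp N t))) mX (@cover_first _ _ _ _ N)) _.
  have Et t : P s (Cyl (N + t).+1 (shiftA (fun u => A u `&` pat Bi N t u))) = \int[mu]_y P y (piece Bi A N t) := MS HP (mAp N t) s (N + t).
  rewrite (eq_eseriesr (fun t _ => Et t)).
  apply: lime_le.
    by apply: is_cvg_nneseries => t _ _; apply: integral_ge0.
  near=> n.
  apply: le_trans (lint_sum _ _ _) _ => //.
  apply: lint_le => y; first by apply: sume_ge0.
  rewrite /f /Zs measure_semi_bigcup //; last 3 first.
  - by move=> t; exact: mpiece.
  - exact: piece_triv.
  - exact: mZs.
  exact: nneseries_lim_ge.
have mu1 : mu setT = 1 by apply: prob_kernel.
have f0 N y : 0 <= f N y by [].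
have f1 N y : f N y <= 1 by apply: probability_le1; exact: mZs.
have fdec N y : f N.+1 y <= f N y.
  by apply: le_measure; rewrite ?inE; [exact: mZs|exact: mZs|exact: Zs_dec].
have flim (e : R) y : (0 < e)%R -> ~ (forall N, e%:E < f N y).
  move=> e0 Hall.
  have cvgZ : (fun N => P y (Zs Bi A N)) @ \oo --> P y (\bigcap_N Zs Bi A N).
    apply: nonincreasing_cvg_mu.
    - apply: (le_lt_trans (probability_le1 (P y) (@mZs _ _ Bi A 0%N mB mA))); exact: ltry.
    - by move=> N; exact: mZs.
    - by apply: bigcapT_measurable => N; exact: mZs.
    - move=> n m nm; apply/subsetPset; elim: m nm => [|m IH].
        by rewrite leqn0 => /eqP ->.
      rewrite leq_eqVlt => /orP [/eqP -> //|]; rewrite ltnS => /IH.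
      exact: subset_trans (@Zs_dec _ _ Bi A m).
  have h1 : e%:E <= P y (\bigcap_N Zs Bi A N).
    rewrite -(cvg_lim _ cvgZ) //; apply: lime_ge; first exact: (cvgP _ cvgZ).
    by near=> N; exact: ltW (Hall N).
  have h2 : P y (\bigcap_N Zs Bi A N) <= 0.
    rewrite -(H0 y); apply: le_measure; rewrite ?inE.
    - by apply: bigcapT_measurable => N; exact: mZs.
    - exact: measurableI (mRect mA) (mLsup mB).
    - exact: Zs_cap.
  by have := le_trans h1 h2; rewrite lee_fin leNgt e0.
apply/eqP; rewrite eq_le measure_ge0 andbT; apply/lee_addgt0Pr => e e0.
rewrite add0e; have [N HN] := lint_zero mu1 f0 f1 fdec flim e0.
exact: le_trans (stepA N) HN.
Unshelve. all: by end_near.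
Qed.

End key.
Lemma iter_shiftA d (S : measurableType d) (A : nat -> set S) k u :
  iter k (@shiftA _ S) A u = if (u < k)%N then setT else A (u - k)%N.
Proof.
elim: k u => [|k IH] u /=; first by rewrite subn0.
by case: u => [|u] //=; rewrite IH ltnS subSS.
Qed.

Lemma miter d (S : measurableType d) (A : nat -> set S) k :
  (forall u, measurable (A u)) -> forall u, measurable (iter k (@shiftA _ S) A u).
Proof. by move=> mA u; rewrite iter_shiftA; case: ifP. Qed.

Lemma not_io d (S : measurableType d) (X : set S) (w : nat -> S) :
  ~ inf_often X w -> exists N, forall t, (N <= t)%N -> ~ X (w t).
Proof.
move=> nio; apply: contrapT => H; apply: nio => N; apply: contrapT => H2.
by apply: H; exists N => t Nt Xt; apply: H2; exists t.
Qed.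

Unset Implicit Arguments.

Theorem lemma2 (d : measure_display) (S : measurableType d) (R : realType)
    (U : finType) (Ts : U -> R.-pker S ~> S) (l : nat) (B : nat -> set S)
    (s0 : S) (rho : S -> U) (P : S -> probability (paths S) R) :
  measurable_partition l B ->
  univ_measurable_policy R rho ->
  is_path_measure Ts rho P ->
  (forall (n : nat) (p : 'I_n.+1 -> S), p ord0 = s0 ->
     forall i : nat, odd i -> (1 <= i <= l)%N ->
       B i (p ord_max) -> P (p ord_max) (eventually_safe l B i) = 1) ->
  P s0 (parity l B) = 1.
Proof.
move=> [mB _ _] _ HP Hyp.
pose H i := [set x | exists j, [/\ ~~ odd j, (i + 1 <= j <= l)%N & B j x]].
have mH i : measurable (H i).
  have -> : H i = \bigcup_(j in [set j | ~~ odd j && (i + 1 <= j <= l)%N]) B j.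
    apply/seteqP; split => x /=.
      by move=> [j [ej jr Bj]]; exists j => //=; rewrite ej jr.
    by move=> [j /= /andP [ej jr] Bj]; exists j.
  by apply: bigcup_measurable => j /= /andP [_ /andP [h1 h2]]; apply: mB; lia.
pose A0 i : nat -> set S := fun u => if u == 0%N then B i `&` ~` H i else ~` H i.
have mA0 i : (1 <= i <= l)%N -> forall u, measurable (A0 i u).
  move=> il u; rewrite /A0; case: ifP => _; last exact: measurableC.
  by apply: measurableI; [exact: mB|exact: measurableC].
have base i : odd i -> (1 <= i <= l)%N ->
    forall y, P y (Rect (A0 i) `&` Lsup (B i)) = 0.
  move=> oi il y.
  have mX : measurable (Rect (A0 i) `&` Lsup (B i)).
    exact: measurableI (mRect (mA0 i il)) (mLsup (mB i il)).
  have [By|nBy] := pselect (B i y).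
    pose p : 'I_2 -> S := fun k => if val k == 0%N then s0 else y.
    have ES1 : P y (eventually_safe l B i) = 1 := Hyp 1%N p erefl i oi il By.
    have mES : measurable (eventually_safe l B i).
      have -> : eventually_safe l B i = \bigcup_m
          ((\bigcap_(k in [set k | (m <= k)%N]) [set w : paths S | (~` B i) (w k)])
           `|` [set w : paths S | H i (w m)]).
        apply/seteqP; split => w /=.
          by move=> [m Hm]; exists m.
        by move=> [m _ Hm]; exists m.
      apply: bigcupT_measurable => m; apply: measurableU; last exact: mcoord.
      apply: bigcap_measurable; first by exists m => /=.
      by move=> k _; apply: mcoord; apply: measurableC; exact: mB.
    have hsub : Rect (A0 i) `&` Lsup (B i) `<=` ~` eventually_safe l B i.
      move=> w [HR HL] [m [Hn|Hj]].
        by have [k mk Bk] := HL m; exact: Hn k mk Bk.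
      by have := HR m; rewrite /A0; case: ifP => _ => [[_]|]; apply.
    apply/eqP; rewrite eq_le measure_ge0 andbT.
    apply: le_trans (le_measure _ _ _ hsub) _; rewrite ?inE //; first exact: measurableC.
    have h := probability_setC (P y) mES; rewrite ES1 subee // in h.
    by move: h => /eqP; rewrite eq_le => /andP [h _]; exact: h.
  have hsub : Rect (A0 i) `&` Lsup (B i) `<=` Cyl 0 (fun _ => B i).
    move=> w [HR _] k; rewrite leqn0 => /eqP ->; rewrite inE.
    by have := HR 0%N; rewrite /A0 /= => -[].
  apply/eqP; rewrite eq_le measure_ge0 andbT.
  apply: le_trans (le_measure _ _ _ hsub) _; rewrite ?inE //.
    by apply: mCyl => _; exact: mB.
  have h := HP y 0%N (fun _ => B i) (fun _ => mB i il).
  rewrite /= indicE memNset // in h.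
  by move: h => /eqP; rewrite eq_le => /andP [h _]; exact: h.
have iter0 i : odd i -> (1 <= i <= l)%N ->
    forall k y, P y (Rect (iter k (@shiftA _ S) (A0 i)) `&` Lsup (B i)) = 0.
  move=> oi il; elim => [|k IH] y; first exact: base.
  exact: (Kstep HP (mB i il) (miter k (mA0 i il)) IH y).
pose Bad i k := if odd i && (1 <= i <= l)%N then
  Rect (iter k (@shiftA _ S) (A0 i)) `&` Lsup (B i) else set0.
have mBad i k : measurable (Bad i k).
  rewrite /Bad; case: ifP => // /andP [oi il].
  exact: measurableI (mRect (miter k (mA0 i il))) (mLsup (mB i il)).
have PBad i k : P s0 (Bad i k) = 0.
  by rewrite /Bad; case: ifP => // /andP [oi il]; exact: iter0.
pose Nset := \bigcup_i \bigcup_k Bad i k.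
have mN : measurable Nset.
  by apply: bigcupT_measurable => i; exact: bigcupT_measurable.
have PN : P s0 Nset = 0.
  apply/eqP; rewrite eq_le measure_ge0 andbT.
  have h : P s0 Nset <= \sum_(i <oo) P s0 (\bigcup_k Bad i k).
    apply: (measure_sigma_subadditive (P s0)) => // i.
    exact: bigcupT_measurable.
  apply: le_trans h _.
  rewrite eseries0 // => i _ _.
  apply/eqP; rewrite eq_le measure_ge0 andbT.
  have h : P s0 (\bigcup_k Bad i k) <= \sum_(k <oo) P s0 (Bad i k).
    apply: (measure_sigma_subadditive (P s0)) => //; last exact: bigcupT_measurable.
  apply: le_trans h _.
  by rewrite eseries0 // => k _ _; rewrite PBad.
have parE : parity l B = ~` Nset.
  apply/seteqP; split => w.
    move=> Hpar [i _ [k _]]; rewrite /Bad; case: ifP => // /andP [oi il] [HR HL].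
    have [j [ej jr ioj]] := Hpar i oi il HL.
    have [t kt Bjt] := ioj k.
    have := HR t; rewrite iter_shiftA ltnNge kt /= /A0.
    by case: ifP => _ => [[_ nH]|nH]; apply: nH; exists j; split.
  move=> nN i oi il ioi; apply: contrapT => nj.
  have unif : forall n, exists N, forall j, (j < n)%N -> ~~ odd j ->
      (i + 1 <= j <= l)%N -> forall t, (N <= t)%N -> ~ B j (w t).
    elim => [|n [N IH]]; first by exists 0%N.
    have [Nn HNn] : exists Nn, ~~ odd n -> (i + 1 <= n <= l)%N ->
        forall t, (Nn <= t)%N -> ~ B n (w t).
      case: (boolP (~~ odd n && (i + 1 <= n <= l)%N)) => [/andP [en nr]|hn].
        have : ~ inf_often (B n) w by move=> io; apply: nj; exists n; split.
        by move=> /not_io [N0 HN0]; exists N0 => _ _.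
      by exists 0%N => en nr; exfalso; move/negP: hn; apply; rewrite en nr.
    exists (maxn N Nn) => j jn ej jr t Nt.
    have [jE|jE] := eqVneq j n.
      by rewrite jE in ej jr *; apply: HNn => //; exact: leq_trans (leq_maxr _ _) Nt.
    apply: IH => //; first by move: jn jE; rewrite ltnS leq_eqVlt => /orP [->|].
    exact: leq_trans (leq_maxl _ _) Nt.
  have [N HN] := unif l.+1.
  have [k Nk Bik] := ioi N.
  apply: nN; exists i => //; exists k => //; rewrite /Bad oi il /=; split => // u.
  rewrite iter_shiftA; case: ifP => // /negbT; rewrite -leqNgt => ku.
  have nHu : ~ H i (w u).
    by move=> [j [ej jr Bj]]; apply: (HN j _ ej jr u _ Bj); lia.
  rewrite /A0; case: ifP => [/eqP uk|_] //; split => //.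
  by have -> : u = k by lia.
by rewrite parE probability_setC // PN sube0.
Qed.
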